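(* Let $G$ be a finite graph with no frozen vertices. Then the Mycielskian $M(G)$ of $G$ has no frozen vertices.
   Context: For a graph $H$, a vertex $x$ is frozen if for every $\chi(H)$-colouring of $H$ all $\chi(H)$ colours appear on the closed neighbourhood of $x$ (so $x$ can never be recoloured); $\chi$ denotes the chromatic number. If $G$ has vertices $v_1,\dots,v_n$, its Mycielskian $M(G)$ is obtained by adding new vertices $u_1,\dots,u_n,w$, edges $wu_i$ for all $i$, and for each edge $v_iv_j\in E(G)$ the edges $u_iv_j$ and $v_iu_j$. It is known that $\chi(M(G))=\chi(G)+1$. *)

(* Defs.v *)
From mathcomp Require Import all_boot.
Set Implicit Arguments. Unset Strict Implicit. Unset Printing Implicit Defensive.

(* A finite simple graph is a symmetric irreflexive relation e on a finType T. *)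

Definition colourable (T : finType) (e : rel T) (k : nat) : bool :=
  [exists f : {ffun T -> 'I_k}, [forall x, forall y, e x y ==> (f x != f y)]].

Lemma colourable_card (T : finType) (e : rel T) :
  [forall x, ~~ e x x] -> exists k, colourable e k.
Proof.
move=> /forallP irr; exists #|T|; apply/existsP; exists [ffun x => enum_rank x].
apply/forallP => x; apply/forallP => y; apply/implyP => exy.
rewrite !ffunE; apply/negP => /eqP /enum_rank_inj exy'.
by move: (irr x); rewrite {2}exy' exy.
Qed.

(* Chromatic number: least k such that e is k-colourable (for an irreflexive
   relation; defined as 0 otherwise, never used). *)
Definition chi (T : finType) (e : rel T) : nat :=
  match boolP [forall x, ~~ e x x] with
  | AltTrue h => ex_minn (colourable_card h)
  | AltFalse _ => 0
  end.

Definition proper_colouring (T : finType) (e : rel T) (k : nat)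
  (f : T -> 'I_k) : Prop := forall x y, e x y -> f x != f y.

Definition frozen (T : finType) (e : rel T) (x : T) : Prop :=
  forall f : T -> 'I_(chi e), proper_colouring e f ->
  forall c : 'I_(chi e), exists y, ((y == x) || e x y) && (f y == c).

(* Mycielskian: vertices Some (inl v_i), Some (inr u_i), and None = w. *)
Definition myc_rel (T : finType) (e : rel T) : rel (option (T + T)) :=
  fun a b =>
  match a, b with
  | Some (inl x), Some (inl y) => e x y
  | Some (inl x), Some (inr y) => e x y
  | Some (inr x), Some (inl y) => e x y
  | None, Some (inr _) => true
  | Some (inr _), None => true
  | _, _ => false
  end.

(* Main.v *)
Require Import Defs.
From mathcomp Require Import all_boot.
From mathcomp Require Import zify.
From Stdlib Require Classical_Prop.

Lemma chi_spec (T : finType) (e : rel T) : irreflexive e ->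
  colourable e (chi e) /\ forall m, colourable e m -> chi e <= m.
Proof.
move=> irr; rewrite /chi; destruct (boolP [forall x, ~~ e x x]) as [h|h].
  by case: ex_minnP.
by exfalso; move/negP: h; apply; apply/forallP => x; rewrite irr.
Qed.

Lemma nat_col (T : finType) (e : rel T) n (f : T -> nat) :
  (forall x, f x < n) -> (forall x y, e x y -> f x != f y) -> colourable e n.
Proof.
move=> Hlt Hp; apply/existsP; exists [ffun x => Ordinal (Hlt x)].
apply/forallP => x; apply/forallP => y; apply/implyP => exy.
by rewrite !ffunE -val_eqE /=; apply: Hp.
Qed.

Lemma col_nat (T : finType) (e : rel T) n : colourable e n ->
  exists f : T -> 'I_n, forall x y, e x y -> (f x : nat) != f y.
Proof.
move=> /existsP [f /forallP Hf]; exists f => x y exy.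
by move: (Hf x) => /forallP /(_ y) /implyP /(_ exy); rewrite -val_eqE.
Qed.

Lemma myc_irr (T : finType) (e : rel T) : irreflexive e -> irreflexive (myc_rel e).
Proof. by move=> irr [[x|x]|] //=; rewrite irr. Qed.

Lemma myc_upper (T : finType) (e : rel T) k (f : T -> 'I_k) :
  (forall x y, e x y -> (f x : nat) != f y) ->
  colourable (myc_rel e) k.+1.
Proof.
move=> Hf.
apply: (@nat_col _ _ _ (fun o => match o with Some (inl y) => (f y : nat)
   | Some (inr y) => (f y : nat) | None => k end)).
  by move=> [[y|y]|] //=; apply: leqW.
move=> [[x|x]|] [[y|y]|] //= exy; try exact: Hf.
- by rewrite neq_ltn ltn_ord.
- by rewrite neq_ltn ltn_ord orbT.
Qed.

Lemma myc_lower (T : finType) (e : rel T) m :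
  colourable (myc_rel e) m -> 0 < m /\ colourable e m.-1.
Proof.
move=> /col_nat [g Hg].
have m0 : 0 < m by case: (g None) => a; lia.
split => //.
pose a := (g None : nat).
pose c x := if (g (Some (inl x)) : nat) == a then (g (Some (inr x)) : nat)
            else (g (Some (inl x)) : nat).
have cna : forall x, c x != a.
  move=> x; rewrite /c; case: ifP => [_|/negbT //].
  exact: (Hg (Some (inr x)) None).
have clt : forall x, c x < m.
  by move=> x; rewrite /c; case: ifP.
have alt : a < m by rewrite /a ltn_ord.
apply: (@nat_col _ _ _ (fun x => if c x == m.-1 then a else c x)).
  move=> x; move: (cna x) (clt x) => /eqP h1 h2; case: (c x =P m.-1); lia.
move=> x y exy.
have cxy : c x != c y.
  rewrite /c.
  have e1 := Hg (Some (inl x)) (Some (inl y)) exy.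
  have e2 := Hg (Some (inl x)) (Some (inr y)) exy.
  have e3 := Hg (Some (inr x)) (Some (inl y)) exy.
  case: (nat_of_ord (g (Some (inl x))) =P a) => h1; case: (nat_of_ord (g (Some (inl y))) =P a) => h2 //.
  by move: e1; rewrite h1 h2 eqxx.
move: (cna x) (cna y) cxy => /eqP h1 /eqP h2 /eqP h3; case: (c x =P m.-1); case: (c y =P m.-1); lia.
Qed.

Arguments chi_spec {T e}.
Arguments nat_col {T e n}.
Arguments col_nat {T e n}.
Arguments myc_irr {T e}.
Arguments myc_upper {T e k}.
Arguments myc_lower {T e m}.

Lemma chi_myc (T : finType) (e : rel T) : irreflexive e ->
  chi (myc_rel e) = (chi e).+1.
Proof.
move=> irr.
have [ce cmin] := chi_spec irr.
have [cm cmmin] := chi_spec (myc_irr irr).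
have [f Hf] := col_nat ce.
apply/eqP; rewrite eqn_leq; apply/andP; split.
  by apply: cmmin; apply: myc_upper Hf.
have [m0 cl] := myc_lower cm.
have := cmin _ cl; lia.
Qed.

Theorem lemma2p5 (T : finType) (e : rel T) :
  symmetric e -> irreflexive e -> 0 < #|T| ->
  (forall x : T, ~ frozen e x) ->
  forall z : option (T + T), ~ frozen (myc_rel e) z.
Proof.
move=> sym irr /card_gt0P [x0 _] nfr z.
rewrite /frozen chi_myc //.
set k := chi e.
have Hcol : forall (x : T), exists (f : T -> 'I_k) (c : 'I_k),
   (forall x y, e x y -> (f x : nat) != f y) /\
   forall y, ((y == x) || e x y) -> (f y : nat) != c.
  move=> x; have := nfr x; rewrite /frozen -/k => H.
  apply: Classical_Prop.NNPP => H2; apply: H => f Hf c.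
  apply: Classical_Prop.NNPP => H3; apply: H2; exists f, c; split.
    by move=> u v /Hf; rewrite -val_eqE.
  move=> y hy; rewrite val_eqE; apply/negP => /eqP fy; apply: H3; exists y.
  by rewrite hy fy eqxx.
move=> Hfr.
case: z Hfr => [[x|x]|] Hfr.
- have [f [c [Hf Hc]]] := Hcol x.
  pose gn (o : option (T + T)) := match o with Some (inl y) => (f y : nat)
     | Some (inr y) => (f y : nat) | None => k end.
  have gl : forall o, gn o < k.+1 by move=> [[y|y]|] //=; apply: leqW.
  have Hp : proper_colouring (myc_rel e) (fun o => (inord (gn o) : 'I_k.+1)).
    move=> u v huv; rewrite -val_eqE /= !inordK //.
    case: u v huv => [[u|u]|] [[v|v]|] //= huv; try exact: Hf.
    * by rewrite neq_ltn ltn_ord.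
    * by rewrite neq_ltn ltn_ord orbT.
  have [y /andP [hy /eqP gy]] := Hfr _ Hp (inord c).
  move: gy => /(congr1 val); rewrite /= !inordK //; last by apply: leqW.
  case: y hy => [[y|y]|] //= hy; first exact/eqP/Hc.
    by apply/eqP/Hc; rewrite hy orbT.
- have [f [c [Hf Hc]]] := Hcol x.
  pose gn (o : option (T + T)) := match o with Some (inl y) => (f y : nat)
     | Some (inr y) => (f y : nat) | None => k end.
  have gl : forall o, gn o < k.+1 by move=> [[y|y]|] //=; apply: leqW.
  have Hp : proper_colouring (myc_rel e) (fun o => (inord (gn o) : 'I_k.+1)).
    move=> u v huv; rewrite -val_eqE /= !inordK //.
    case: u v huv => [[u|u]|] [[v|v]|] //= huv; try exact: Hf.
    * by rewrite neq_ltn ltn_ord.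
    * by rewrite neq_ltn ltn_ord orbT.
  have [y /andP [hy /eqP gy]] := Hfr _ Hp (inord c).
  move: gy => /(congr1 val); rewrite /= !inordK //; last by apply: leqW.
  case: y hy => [[y|y]|] //= hy.
    + by apply/eqP/Hc; rewrite hy orbT.
    + move: hy; rewrite orbF => /eqP [->]; apply/eqP/Hc; by rewrite eqxx.
    + move=> h; move: (ltn_ord c); lia.
- have [f [c [Hf Hc]]] := Hcol x0.
  have k2 : 1 < k.
    have := Hc x0; rewrite eqxx => /(_ isT); move: (ltn_ord c) (ltn_ord (f x0)); lia.
  pose gn (o : option (T + T)) := match o with Some (inl y) => (f y : nat)
     | Some (inr y) => k | None => 0 end.
  have gl : forall o, gn o < k.+1 by move=> [[y|y]|] //=; apply: leqW.
  have Hp : proper_colouring (myc_rel e) (fun o => (inord (gn o) : 'I_k.+1)).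
    move=> u v huv; rewrite -val_eqE /= !inordK //.
    case: u v huv => [[u|u]|] [[v|v]|] //= huv; try exact: Hf.
    * by rewrite neq_ltn ltn_ord ?orbT.
    * by rewrite neq_ltn ltn_ord ?orbT.
    * lia.
    * lia.
  have [y /andP [hy /eqP gy]] := Hfr _ Hp (inord 1).
  move: gy => /(congr1 val); rewrite /= !inordK //; last lia.
  case: y hy => [[y|y]|] //= hy; lia.
Qed.
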